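(* Let $A$ be a T-brace. If the additive group of the $\star$-center $\zeta(\star,A)$ of $A$ is torsion-free, then the upper $\star$-hypercenter $\zeta_\infty(\star,A)$ of $A$ coincides with $\zeta(\star,A)$.
   Context: A (left) brace is a set $A$ with two operations $+$ and $\cdot$ such that $(A,+)$ is an abelian group, $(A,\cdot)$ is a group, and $a(b+c)=ab+ac-a$ for all $a,b,c\in A$; the identities of both groups coincide (denoted $0$). Put $a\star b=ab-a-b$. A subbrace is a subset which is a subgroup of both $(A,+)$ and $(A,\cdot)$. A subbrace $L$ is an ideal of $A$ if $a\star z\in L$ and $z\star a\in L$ for all $a\in A$, $z\in L$; then the quotient brace $A/L$ is defined naturally. A brace $A$ is a T-brace if being an ideal is transitive: whenever $I$ is an ideal of $J$ and $J$ is an ideal of $A$, $I$ is an ideal of $A$. The $\star$-center is $\zeta(\star,A)=\{a\in A: a\star x=x\star a=0 \text{ for all } x\in A\}$, an ideal of $A$. The upper $\star$-central series is defined by $\zeta_0(\star,A)=0$, $\zeta_1(\star,A)=\zeta(\star,A)$, $\zeta_{\alpha+1}(\star,A)/\zeta_\alpha(\star,A)=\zeta(\star,A/\zeta_\alpha(\star,A))$, and $\zeta_\lambda(\star,A)=\bigcup_{\mu<\lambda}\zeta_\mu(\star,A)$ for limit ordinals $\lambda$; its last term $\zeta_\infty(\star,A)$ is the upper $\star$-hypercenter. *)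

(* Defs.v *)
Record brace := Brace {
  carrier :> Type;
  add : carrier -> carrier -> carrier;
  opp : carrier -> carrier;
  zero : carrier;
  mul : carrier -> carrier -> carrier;
  inv : carrier -> carrier;
  addA : forall a b c, add a (add b c) = add (add a b) c;
  addC : forall a b, add a b = add b a;
  add0r : forall a, add zero a = a;
  addNr : forall a, add (opp a) a = zero;
  mulA : forall a b c, mul a (mul b c) = mul (mul a b) c;
  mul0r : forall a, mul zero a = a;
  mulr0 : forall a, mul a zero = a;
  mulVr : forall a, mul (inv a) a = zero;
  mulrV : forall a, mul a (inv a) = zero;
  brace_law : forall a b c,
      mul a (add b c) = add (add (mul a b) (mul a c)) (opp a)
}.

Arguments add {_}. Arguments opp {_}. Arguments zero {_}.
Arguments mul {_}. Arguments inv {_}.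

Section BraceDefs.
Variable A : brace.

Definition star (a b : A) : A := add (add (mul a b) (opp a)) (opp b).

Fixpoint nmul (n : nat) (a : A) : A :=
  match n with O => zero | S m => add a (nmul m a) end.

Definition subbrace (L : A -> Prop) : Prop :=
  L zero /\
  (forall x y, L x -> L y -> L (add x y)) /\
  (forall x, L x -> L (opp x)) /\
  (forall x y, L x -> L y -> L (mul x y)) /\
  (forall x, L x -> L (inv x)).

(* [I] is an ideal of the subbrace [J] (viewed as a brace in its own right):
   I is a subbrace of J, and a*z, z*a lie in I for all a in J, z in I. *)
Definition ideal_of (J I : A -> Prop) : Prop :=
  subbrace I /\ (forall x, I x -> J x) /\
  (forall a z, J a -> I z -> I (star a z) /\ I (star z a)).

Definition ideal (I : A -> Prop) : Prop := ideal_of (fun _ => True) I.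

Definition T_brace : Prop :=
  forall I J : A -> Prop, subbrace J -> ideal_of J I -> ideal J -> ideal I.

Definition star_center (a : A) : Prop :=
  forall x, star a x = zero /\ star x a = zero.

(* Successor step of the upper star-central series:
   zeta_{alpha+1} is the preimage in A of zeta(star, A/zeta_alpha).
   Since the zero of A/H is the coset H and the class of a*x is the star of
   the classes, a + H is star-central in A/H iff a*x, x*a lie in H for all x. *)
Definition next_term (H : A -> Prop) (a : A) : Prop :=
  forall x, H (star a x) /\ H (star x a).

(* The terms zeta_alpha (alpha any ordinal) of the upper star-central series:
   the smallest class containing zeta_0 = 0, closed under the successor step
   and under unions of (nonempty) families of terms (limit steps). *)
Inductive ucs_term : (A -> Prop) -> Prop :=
  | ucs_zero : ucs_term (fun a => a = zero)
  | ucs_succ : forall H, ucs_term H -> ucs_term (next_term H)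
  | ucs_union : forall F : (A -> Prop) -> Prop,
      (exists H, F H) -> (forall H, F H -> ucs_term H) ->
      ucs_term (fun a => exists H, F H /\ H a).

(* The upper star-hypercenter: the last term, i.e. the union of all terms. *)
Definition star_hypercenter (a : A) : Prop :=
  exists H, ucs_term H /\ H a.

Definition center_torsion_free : Prop :=
  forall (z : A) (n : nat), star_center z -> nmul (S n) z = zero -> z = zero.

End BraceDefs.

(* Main.v *)
From HB Require Import structures.
From mathcomp Require Import all_boot all_algebra.
From mathcomp Require Import boolp.
From mathcomp Require Import zify.
Require Import Defs.
Import GRing.Theory.

Section Main.
Variable A : brace.
HB.instance Definition _ := gen_eqMixin (carrier A).
HB.instance Definition _ := gen_choiceMixin (carrier A).
HB.instance Definition _ := GRing.isZmodule.Build (carrier A) (@Defs.addA A) (@Defs.addC A) (@Defs.add0r A) (@Defs.addNr A).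
Local Open Scope ring_scope.

Implicit Types a b x y u v z w : A.

Lemma starE a b : star A a b = mul a b - a - b. Proof. by []. Qed.
Lemma blaw a b c : mul a (b + c) = mul a b + mul a c - a.
Proof. exact: brace_law. Qed.

Definition lam a x := mul a x - a.

Lemma lam_add a x y : lam a (x + y) = lam a x + lam a y.
Proof. by rewrite /lam blaw addrACA addrA. Qed.

Lemma lam0 a : lam a 0 = 0.
Proof. by rewrite /lam (@Defs.mulr0 A) subrr. Qed.

Lemma lam_opp a x : lam a (- x) = - lam a x.
Proof. by apply/eqP; rewrite -addr_eq0 -lam_add addNr lam0. Qed.

Lemma lam_mul u v x : lam (mul u v) x = lam u (lam v x).
Proof.
rewrite [lam v x]/lam lam_add lam_opp /lam -(@Defs.mulA A) opprB addrA subrK //.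
Qed.

Lemma lamE a x : lam a x = star A a x + x.
Proof. by rewrite starE subrK. Qed.

Lemma starLE a x : star A a x = lam a x - x.
Proof. by rewrite lamE addrK. Qed.

Lemma mulE a x : mul a x = star A a x + a + x.
Proof. by rewrite starE addrAC !subrK. Qed.

Lemma star_addr a x y : star A a (x + y) = star A a x + star A a y.
Proof. by rewrite !starLE lam_add opprD addrACA. Qed.

Lemma star_0r a : star A a 0 = 0.
Proof. by rewrite starLE lam0 subr0. Qed.

Lemma star_oppr a x : star A a (- x) = - star A a x.
Proof. by apply/eqP; rewrite -addr_eq0 -star_addr addNr star_0r. Qed.

Lemma star_0l x : star A 0 x = 0.
Proof. by rewrite starE (@Defs.mul0r A) subr0 subrr. Qed.

Lemma star_mull u v x :
  star A (mul u v) x = star A u (star A v x) + star A u x + star A v x.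
Proof.
rewrite starLE lam_mul (lamE v) lam_add !lamE.
by rewrite addrA addrK addrAC.
Qed.

Lemma star_nmulr a x n : star A a (x *+ n) = star A a x *+ n.
Proof. elim: n => [|n IH]; first by rewrite !mulr0n star_0r.
by rewrite !mulrS star_addr IH. Qed.

Lemma star_mulzr a x n : star A a (x *~ n) = star A a x *~ n.
Proof. case: n => n; rewrite /intmul ?star_oppr star_nmulr //. Qed.

Lemma nmulE n x : nmul A n x = x *+ n.
Proof. elim: n => [|n IH] //=. by rewrite IH mulrS. Qed.

Definition Z := star_center A.
Definition Z2 := next_term A Z.

Lemma Zl z x : Z z -> star A z x = 0. Proof. by move=> h; case: (h x). Qed.
Lemma Zr z x : Z z -> star A x z = 0. Proof. by move=> h; case: (h x). Qed.

Lemma Zc_l z x : Z z -> mul z x = z + x.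
Proof. move=> h; by rewrite mulE Zl // add0r. Qed.

Lemma Z0 : Z 0.
Proof. by move=> x; rewrite star_0l star_0r. Qed.

Lemma Z_add z1 z2 : Z z1 -> Z z2 -> Z (z1 + z2).
Proof.
move=> h1 h2 x; split; last by rewrite star_addr !Zr // addr0.
by rewrite -Zc_l // star_mull !Zl // !addr0.
Qed.

Lemma Z_opp z : Z z -> Z (- z).
Proof.
move=> h x; split; last by rewrite star_oppr Zr // oppr0.
have e : star A (mul z (- z)) x = 0 by rewrite Zc_l // addrN star_0l.
by move: e; rewrite star_mull !(Zl z) // !add0r.
Qed.

Lemma Z_nmul z n : Z z -> Z (z *+ n).
Proof. move=> h; elim: n => [|n IH]; first by rewrite mulr0n; exact: Z0.
by rewrite mulrS; apply: Z_add. Qed.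

Lemma Z_mulz z n : Z z -> Z (z *~ n).
Proof. move=> h; case: n => n /=; rewrite /intmul; [exact: Z_nmul| apply: Z_opp; exact: Z_nmul]. Qed.

Lemma Z_Z2 z : Z z -> Z2 z.
Proof. move=> h x; rewrite Zl // Zr //; split; exact: Z0. Qed.

Lemma star_transl y z x : Z z -> star A (y + z) x = star A y x.
Proof. move=> h; by rewrite addrC -Zc_l // star_mull !(Zl z) // !add0r. Qed.

Lemma star_addl u v x : Z2 v -> Z (star A u v) ->
  star A (u + v) x = star A u x + star A v x.
Proof.
move=> hv huv.
have -> : u + v = mul u v + - star A u v by rewrite mulE addrAC [star A u v + u]addrC addrK.
rewrite star_transl; last exact: Z_opp.
rewrite star_mull Zr ?add0r //. by case: (hv x).
Qed.

Lemma Z2_add u v : Z2 u -> Z2 v -> Z2 (u + v).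
Proof.
move=> hu hv x; rewrite star_addr star_addl //; last by case: (hu v).
case: (hu x) => ?; case: (hv x) => ? ?; split; exact: Z_add.
Qed.

Lemma inv_Z2 y : Z2 y -> inv y = - y + star A y y.
Proof.
move=> hy.
have e : inv y = - y - star A y (inv y).
  have h0 : star A y (inv y) + y + inv y = 0 by rewrite -mulE (@Defs.mulrV A).
  apply/eqP; rewrite -opprD -addr_eq0 addrC [y + _]addrC; exact/eqP.
have hz : Z (star A y (inv y)) by case: (hy (inv y)).
by rewrite {1}e e star_addr star_oppr star_oppr (Zr _ y hz) oppr0 addr0 opprK.
Qed.

Lemma star_oppl u x : Z2 u -> star A (- u) x = - star A u x.
Proof.
move=> hu.
have hux : Z (star A u x) by case: (hu x).
have h1 : star A (inv u) x = - star A u x.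
  apply/eqP; rewrite -addr_eq0.
  have e : star A (mul (inv u) u) x = 0 by rewrite (@Defs.mulVr A) star_0l.
  by move: e; rewrite star_mull (Zr _ _ hux) add0r => ->.
have -> : - u = inv u + - star A u u by rewrite inv_Z2 // addrK.
rewrite star_transl //; apply: Z_opp; by case: (hu u).
Qed.

Lemma Z2_opp u : Z2 u -> Z2 (- u).
Proof.
move=> hu x; rewrite star_oppl // star_oppr; case: (hu x) => ? ?; split; exact: Z_opp.
Qed.

Lemma Z2_nmul u n : Z2 u -> Z2 (u *+ n).
Proof. move=> h; elim: n => [|n IH]; first by rewrite mulr0n; apply: Z_Z2; exact: Z0.
by rewrite mulrS; apply: Z2_add. Qed.

Lemma Z2_mulz u n : Z2 u -> Z2 (u *~ n).
Proof. move=> h; case: n => n /=; rewrite /intmul; [exact: Z2_nmul| apply: Z2_opp; exact: Z2_nmul]. Qed.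

Lemma star_nmull u x n : Z2 u -> star A (u *+ n) x = star A u x *+ n.
Proof. move=> h; elim: n => [|n IH]; first by rewrite !mulr0n star_0l.
rewrite !mulrS star_addl ?IH //; first exact: Z2_nmul.
by case: (h (u *+ n)).
Qed.

Lemma star_mulzl u x n : Z2 u -> star A (u *~ n) x = star A u x *~ n.
Proof. move=> h; case: n => n; rewrite /intmul ?star_oppl ?star_nmull //. exact: Z2_nmul. Qed.


Lemma tf_nat {e} {n} : center_torsion_free A -> Z e -> e *+ n.+1 = 0 -> e = 0.
Proof. move=> htf he h; apply: (htf e n he); by rewrite nmulE. Qed.

Lemma tf_int {e} (n : int) : center_torsion_free A -> Z e -> e *~ n = 0 -> n != 0 -> e = 0.
Proof.
move=> htf he; case: n => [[|n]|n] h hn.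
- by move/negP: hn; case; apply/eqP.
- by apply: (tf_nat (n:=n) htf he); rewrite pmulrn.
- apply: (tf_nat (n:=n) htf he); apply/eqP; rewrite -oppr_eq0; apply/eqP.
  by rewrite pmulrn -mulrNz -NegzE.
Qed.

Lemma Z2_to_Z a : center_torsion_free A -> Z2 a -> (exists k, Z (a *+ k.+1)) -> Z a.
Proof.
move=> htf ha [k hk] x; case: (ha x) => h1 h2; split.
- apply: (tf_nat htf h1); by rewrite -star_nmull // Zl.
- apply: (tf_nat htf h2); by rewrite -star_nmulr Zr.
Qed.

Section Key.
Local Set Implicit Arguments.
Variable a : A.
Hypothesis ha : Z2 a.
Hypothesis hnot : forall k, ~ Z (a *+ k.+1).
Let b := a + a.
Let d := star A b b.
Lemma hb : Z2 b. Proof. exact: Z2_add. Qed.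
Lemma hd : Z d. Proof. by case: (hb b). Qed.

Definition J y := exists (n : int) z, Z z /\ y = b *~ n + z.
Definition I y := exists (n m : int), y = b *~ n + d *~ m.

Lemma J_Z2 y : J y -> Z2 y.
Proof. case=> n [z [hz ->]]; apply: Z2_add; [apply: Z2_mulz; exact: hb | exact: Z_Z2]. Qed.

Lemma J_Z z : Z z -> J z.
Proof. move=> hz; exists 0, z; split => //; by rewrite mulr0z add0r. Qed.

Lemma J_add y w : J y -> J w -> J (y + w).
Proof.
case=> n [z [hz ->]] [n' [z' [hz' ->]]]; exists (n + n'), (z + z'); split; first exact: Z_add.
by rewrite mulrzDr addrACA.
Qed.

Lemma J_opp y : J y -> J (- y).
Proof.
case=> n [z [hz ->]]; exists (- n), (- z); split; first exact: Z_opp.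
by rewrite mulrNz opprD.
Qed.

Lemma J_sub : subbrace A J.
Proof.
split; first exact: (J_Z Z0).
split; first exact: J_add.
split; first exact: J_opp.
split.
- move=> x y hx hy; rewrite mulE -addrA addrC; apply: J_add; first exact: J_add.
  apply: J_Z; by case: (J_Z2 hx y).
- move=> x hx; rewrite inv_Z2; last exact: J_Z2.
  apply: J_add; first exact: J_opp.
  apply: J_Z; by case: (J_Z2 hx x).
Qed.

Lemma J_ideal : ideal A J.
Proof.
split; first exact: J_sub.
split => // x y _ hy; split; apply: J_Z; by case: (J_Z2 hy x).
Qed.

Lemma dZ m : Z (d *~ m). Proof. apply: Z_mulz; exact: hd. Qed.

Lemma I_add y w : I y -> I w -> I (y + w).
Proof.
case=> n [m ->] [n' [m' ->]]; exists (n + n'), (m + m').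
by rewrite !mulrzDr addrACA.
Qed.

Lemma I_opp y : I y -> I (- y).
Proof.
case=> n [m ->]; exists (- n), (- m).
by rewrite !mulrNz opprD.
Qed.

Lemma I_d m : I (d *~ m).
Proof. exists 0, m; by rewrite mulr0z add0r. Qed.

Lemma star_b_l n z x : Z z -> star A (b *~ n + z) x = star A b x *~ n.
Proof. move=> hz; rewrite star_transl // star_mulzl //; exact: hb. Qed.

Lemma star_b_r n z : Z z -> star A b (b *~ n + z) = d *~ n.
Proof. move=> hz; by rewrite star_addr star_mulzr (Zr _ _ hz) addr0. Qed.

Lemma I_J y : I y -> J y.
Proof. case=> n [m ->]; exists n, (d *~ m); split => //; exact: dZ. Qed.

Lemma I_star y w : I y -> I w -> exists k, star A y w = d *~ k.
Proof.
case=> n [m ->] [n' [m' ->]].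
exists (n' * n); rewrite star_b_l ?star_b_r ?mulrzA //; exact: dZ.
Qed.

Lemma I_sub : subbrace A I.
Proof.
split; first by exists 0, 0; rewrite mulr0z addr0.
split; first exact: I_add.
split; first exact: I_opp.
split.
- move=> x y hx hy; rewrite mulE -addrA addrC; apply: I_add; first exact: I_add.
  case: (I_star hx hy) => k ->; exact: I_d.
- move=> x hx; rewrite inv_Z2; last by apply: J_Z2; exact: I_J.
  apply: I_add; first exact: I_opp.
  case: (I_star hx hx) => k ->; exact: I_d.
Qed.

Lemma I_idealJ : ideal_of A J I.
Proof.
split; first exact: I_sub.
split; first exact: I_J.
move=> x y [n [z [hz ->]]] [n' [m' ->]]; split.
- rewrite star_b_l // star_b_r; last exact: dZ. rewrite -mulrzA; exact: I_d.
- rewrite star_b_l; last exact: dZ.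
  rewrite star_b_r // -mulrzA; exact: I_d.
Qed.

Lemma I_Z y : I y -> Z y -> exists m, y = d *~ m.
Proof.
case=> n [m ->] hy; exists m.
have hbn : Z (b *~ n).
  have -> : b *~ n = (b *~ n + d *~ m) - d *~ m by rewrite addrK.
  apply: Z_add => //; apply: Z_opp; exact: dZ.
clear hy; case: n hbn => [[|n]|n] hbn; first by rewrite mulr0z add0r.
- exfalso; apply: (hnot (n.+1 + n)).
  have -> : a *+ (n.+1 + n).+1 = b *~ n.+1.
    rewrite -pmulrn /b -mulr2n -mulrnA; congr (_ *+ _); lia.
  exact: hbn.
- exfalso; apply: (hnot (n.+1 + n)).
  have -> : a *+ (n.+1 + n).+1 = - (b *~ Negz n).
    rewrite NegzE mulrNz opprK -pmulrn /b -mulr2n -mulrnA; congr (_ *+ _); lia.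
  exact: Z_opp.
Qed.

End Key.


Lemma next_Z a : T_brace A -> center_torsion_free A -> Z2 a -> Z a.
Proof.
move=> hT htf ha.
case: (EM (exists k, Z (a *+ k.+1))) => [hk|hk]; first exact: Z2_to_Z.
have hnot : forall k, ~ Z (a *+ k.+1) by move=> k h; apply: hk; exists k.
have [_ [_ hI]] := hT (I a) (J a) (J_sub ha) (I_idealJ ha) (J_ideal ha).
have hbI : I a (a + a) by exists 1, 0; rewrite mulr0z addr0.
have hbZ2 := hb ha.
have hR x : exists m, star A (a + a) x = star A (a + a) (a + a) *~ m.
  apply: (I_Z ha hnot); first by case: (hI x _ Logic.I hbI).
  by case: (hbZ2 x).
have hL x : exists m, star A x (a + a) = star A (a + a) (a + a) *~ m.
  apply: (I_Z ha hnot); first by case: (hI x _ Logic.I hbI).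
  by case: (hbZ2 x).
have haa : Z (star A a a) by case: (ha a).
have hdd : star A (a + a) (a + a) = star A (a + a) a + star A (a + a) a.
  by rewrite star_addr.
have he : star A (a + a) a = 0.
  have heZ : Z (star A (a + a) a) by case: (hbZ2 a).
  case: (hR a) => m hm.
  apply: (tf_int (m + m - 1) htf heZ); last by lia.
  by rewrite mulrzBr mulrzDr -mulrzDl -hdd -hm mulr1z subrr.
have hd0 : star A (a + a) (a + a) = 0 by rewrite hdd he addr0.
move=> x; split.
- have hx : Z (star A a x) by case: (ha x).
  apply: (tf_nat (n:=1) htf hx).
  case: (hR x) => m; rewrite hd0 mul0rz (star_addl a a x ha haa) => h.
  by rewrite mulrS mulr1n.
- have hx : Z (star A x a) by case: (ha x).
  apply: (tf_nat (n:=1) htf hx).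
  case: (hL x) => m; rewrite hd0 mul0rz star_addr => h.
  by rewrite mulrS mulr1n.
Qed.

Lemma main_iff : T_brace A -> center_torsion_free A ->
  forall a : A, star_hypercenter A a <-> star_center A a.
Proof.
move=> hT htf a; split.
- case=> H [hH Ha].
  suff hsub : forall H, ucs_term A H -> forall a, H a -> Z a by exact: hsub H hH a Ha.
  move=> {H hH Ha a} H hH; elim: hH.
  + by move=> a ->; exact: Z0.
  + move=> H0 _ IH a0 h0; apply: next_Z => // x.
    by case: (h0 x) => h1 h2; split; apply: IH.
  + move=> F _ _ IH a0 [H0 [hF h0]]; exact: IH hF a0 h0.
- move=> hz; exists (next_term A (fun a => a = zero)); split.
  + apply: ucs_succ; exact: ucs_zero.
  + exact: hz.
Qed.

End Main.

Theorem theoremA (A : brace) :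
  T_brace A -> center_torsion_free A ->
  forall a : A, star_hypercenter A a <-> star_center A a.
Proof. exact: main_iff. Qed.
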